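(* Fix an integer $m\ge 1$ and consider multiple-choice questions $x$ with $m$ answer options, drawn at random, each with a unique correct answer $y^\star\in\{1,\dots,m\}$. Let $C(x)\subseteq\{1,\dots,m\}$ be a (random) prediction set, let $\nu(x)=|C(x)|$, and let $\hat y'$ denote the final answer produced by the revision procedure (CROQ) described in the context, where a final answer can be correct only if $y^\star\in C(x)$ and $\nu(x)\ge 1$. Let $a=\Pr(\hat y=y^\star)$ be the accuracy of the original single-round answer $\hat y$, and for $k=1,\dots,m$ define $r_k=\Pr(\nu(x)=k)$, $\rho_k=\Pr(y^\star\in C(x)\mid \nu(x)=k)$ and $f_{\mathrm{post}}(k)=\Pr(\hat y'=y^\star\mid \nu(x)=k,\ y^\star\in C(x))$. Then: (1) The change in accuracy due to CROQ equals $$\Delta(f_{\mathrm{post}},\alpha,a):=\Pr(\hat y'=y^\star)-a=\sum_{k=1}^m r_k\rho_k f_{\mathrm{post}}(k)-a.$$ (2) A sufficient condition for $\Delta(f_{\mathrm{post}},\alpha,a)>0$ is that $r_k\rho_k>\dfrac{a}{m\,f_{\mathrm{post}}(k)}$ for all $1\le k\le m$. (3) Suppose the function $f_{\mathrm{post}}$ is held fixed and is monotonically decreasing in $k$. Then among all collections of pairs $\{(r_k,\rho_k)\}_{k=1}^m$ with $r_k\ge 0$, $\rho_k\in[0,1]$, $\sum_{k=1}^m r_k\le 1$ and $1-\alpha\le\sum_{k=1}^m r_k\rho_k\le 1$, the quantity $\sum_{k=1}^m r_k\rho_k f_{\mathrm{post}}(k)-a$ is maximized by the greedy choice that makes $r_1\rho_1$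 as large as possible, then $r_2\rho_2$ as large as possible given that, and so on; in particular the maximizer satisfies $r_1\rho_1\ge r_2\rho_2\ge\cdots\ge r_m\rho_m$.
   Context: Setting (conformal revision of questions, CROQ): an LLM answers a multiple-choice question $x$ with $m$ options; its standard answer $\hat y$ is the option with the highest softmax score over the option-key tokens. A conformal prediction set $C(x)=\{y: g(x,y)\ge\hat\tau_\alpha\}$ is computed from a score function $g$ and a threshold $\hat\tau_\alpha$ calibrated by split conformal prediction at miscoverage level $\alpha\in[0,1]$, so that $\Pr(y^\star\in C(x))\ge 1-\alpha$. CROQ then rewrites the question keeping only the options in $C(x)$ (relabelled) and takes the LLM's answer $\hat y'$ to the revised question; thus the final answer is an element of $C(x)$ and is correct only when $y^\star\in C(x)$ (empty sets never yield a correct answer). The parameter $\alpha$ enters only through the constraint $\sum_k r_k\rho_k\ge 1-\alpha$ on the coverage. *)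

(* Defs.v *)
From HB Require Import structures.
From mathcomp Require Import all_boot all_order all_algebra.
From mathcomp Require Import all_classical all_reals all_analysis.
Set Implicit Arguments. Unset Strict Implicit. Unset Printing Implicit Defensive.
Import Order.TTheory GRing.Theory Num.Theory.
Local Open Scope classical_set_scope.
Local Open Scope ring_scope.

Section CROQ.
Context {R : realType} {d : measure_display} {T : measurableType d}.

Definition Pr (P : probability T R) (A : set T) : R := fine (P A).

(* conditional probability Pr(A | B) = Pr(A /\ B) / Pr(B)
   (MathComp convention: x / 0 = 0, so it is 0 when Pr(B) = 0) *)
Definition condPr (P : probability T R) (A B : set T) : R :=
  Pr P (A `&` B) / Pr P B.

Context {m : nat}.

(* index k : 'I_m stands for the set size k.+1 (i.e. k = 1..m in the paper) *)
Definition ev_size (C : T -> {set 'I_m}) (k : 'I_m) : set T :=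
  [set w | #|C w| = k.+1]%N.
Definition ev_cover (ystar : T -> 'I_m) (C : T -> {set 'I_m}) : set T :=
  [set w | ystar w \in C w].
Definition ev_correct (yhat ystar : T -> 'I_m) : set T :=
  [set w | yhat w = ystar w].

Definition r_k (P : probability T R) (C : T -> {set 'I_m}) (k : 'I_m) : R :=
  Pr P (ev_size C k).
Definition rho_k (P : probability T R) (ystar : T -> 'I_m)
  (C : T -> {set 'I_m}) (k : 'I_m) : R :=
  condPr P (ev_cover ystar C) (ev_size C k).
Definition fpost (P : probability T R) (ystar yhat' : T -> 'I_m)
  (C : T -> {set 'I_m}) (k : 'I_m) : R :=
  condPr P (ev_correct yhat' ystar) (ev_size C k `&` ev_cover ystar C).

Definition feasible (alpha : R) (r rho : 'I_m -> R) : Prop :=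
  [/\ (forall k, 0 <= r k), (forall k, 0 <= rho k <= 1),
      \sum_(k < m) r k <= 1 &
      1 - alpha <= \sum_(k < m) r k * rho k <= 1].

Definition objective (f : 'I_m -> R) (a : R) (r rho : 'I_m -> R) : R :=
  \sum_(k < m) r k * rho k * f k - a.

Definition greedy (alpha : R) (r rho : 'I_m -> R) : Prop :=
  feasible alpha r rho /\
  forall k : 'I_m, forall r' rho' : 'I_m -> R, feasible alpha r' rho' ->
    (forall j : 'I_m, (j < k)%N -> r' j * rho' j = r j * rho j) ->
    r' k * rho' k <= r k * rho k.
End CROQ.

(* Main.v *)
Require Import Defs.
From HB Require Import structures.
From mathcomp Require Import all_boot all_order all_algebra.
From mathcomp Require Import all_classical all_reals all_analysis.
Import Order.TTheory GRing.Theory Num.Theory.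
Local Open Scope classical_set_scope.
Local Open Scope ring_scope.

Set Implicit Arguments.
Section H.
Context (R : realType) (d : measure_display) (T : measurableType d) (P : probability T R).

Lemma mfiber (X : finType) (h : T -> X) (Q : X -> Prop) :
  (forall x, measurable [set w | h w = x]) -> measurable [set w | Q (h w)].
Proof.
move=> hx.
have -> : [set w | Q (h w)] = \bigcup_(x in Q) [set w | h w = x].
  by apply/seteqP; split => w /=; [move=> q; exists (h w) | case=> x /= ? ->].
by apply: fin_bigcup_measurable => //; exact: finite_finset.
Qed.

Lemma Pr_ge0 A : 0 <= Pr P A.
Proof. exact/fine_ge0/measure_ge0. Qed.

Lemma PrE A : measurable A -> (Pr P A)%:E = P A.
Proof. by move=> mA; rewrite fineK // fin_num_measure. Qed.

Lemma Pr_mono A B : measurable A -> measurable B -> A `<=` B -> Pr P A <= Pr P B.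
Proof.
move=> mA mB AB; rewrite -lee_fin !PrE //; apply: le_measure => //; rewrite inE //.
Qed.

Lemma Pr_sum (m : nat) (A : 'I_m -> set T) B : measurable B ->
  (forall k, measurable (A k)) ->
  (forall i j, A i `&` A j !=set0 -> i = j) ->
  (forall w, B w -> exists k, A k w) ->
  Pr P B = \sum_(k < m) Pr P (B `&` A k).
Proof.
move=> mB mA dA cov.
have hB : B = \bigcup_(k in [set: 'I_m]) (B `&` A k).
  apply/seteqP; split => w /=; first by move=> Bw; have [k ?] := cov w Bw; exists k.
  by case=> k _ [].
apply: EFin_inj; rewrite PrE // {1}hB measure_fin_bigcup //.
- rewrite (fsbigE (enum (ordinal m))) ?enum_uniq //; last by move=> i _; rewrite mem_enum.
  under eq_bigl do rewrite in_setT.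
  rewrite big_enum /= -sumEFin; apply: eq_bigr => k _.
  by rewrite PrE //; exact: measurableI.
- exact: finite_finset.
- move=> i j _ _ [w [[_ ?] [_ ?]]]; apply: dA; by exists w.
- by move=> k _; exact: measurableI.
Qed.
End H.
Section P3.
Context (R : realType) (m : nat) (hm : (0 < m)%N).
Let i0 : 'I_m := Ordinal hm.
Implicit Types r rho : 'I_m -> R.

Lemma feas_ge0 (alpha : R) r rho : feasible alpha r rho -> forall k, 0 <= r k * rho k.
Proof. by case=> hr hrho _ _ k; rewrite mulr_ge0 // (andP (hrho k)).1. Qed.

Lemma feas_le_r (alpha : R) r rho : feasible alpha r rho -> forall k, r k * rho k <= r k.
Proof.
by case=> hr hrho _ _ k; rewrite ler_piMr // (andP (hrho k)).2.
Qed.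

Lemma feas_sum (alpha : R) r rho : feasible alpha r rho -> \sum_(k < m) r k * rho k <= 1.
Proof. by case=> _ _ _ /andP[]. Qed.

Lemma feas_le1 (alpha : R) r rho : feasible alpha r rho -> forall k, r k * rho k <= 1.
Proof.
move=> hf k; have := feas_sum hf; apply: le_trans.
rewrite (bigD1 k) //= lerDl; apply: sumr_ge0 => i _; exact: feas_ge0 hf i.
Qed.

Lemma feas_pair (alpha : R) r rho : feasible alpha r rho -> forall i j, i != j ->
  r i * rho i + r j * rho j <= 1.
Proof.
move=> hf i j ij; have := feas_sum hf; apply: le_trans.
rewrite (bigD1 i) //= lerD2l (bigD1 j) 1?eq_sym //= lerDl.
apply: sumr_ge0 => k _; exact: feas_ge0 hf k.
Qed.

Definition r1 : 'I_m -> R := fun k => if k == i0 then 1 else 0.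
Definition rho1 : 'I_m -> R := fun _ => 1.

Lemma sum_r1 (F : 'I_m -> R) : \sum_(k < m) r1 k * F k = F i0.
Proof.
rewrite (bigD1 i0) //= /r1 eqxx mul1r big1 ?addr0 // => k /negbTE ->.
by rewrite mul0r.
Qed.

Lemma feas_r1 (alpha : R) : 0 <= alpha -> feasible alpha r1 rho1.
Proof.
move=> ha; split.
- by move=> k; rewrite /r1; case: eqP.
- by move=> k; rewrite /rho1 ler01 lexx.
- by have := sum_r1 (fun _ => 1); under eq_bigr do rewrite mulr1; move=> ->.
- by rewrite sum_r1 /rho1 lexx andbT gerBl.
Qed.

Lemma greedy_r1 (alpha : R) : 0 <= alpha -> greedy alpha r1 rho1.
Proof.
move=> ha; split; first exact: feas_r1.
move=> k r' rho' hf agr; rewrite /rho1 mulr1 /r1.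
case: eqP => [_|/eqP kn]; first exact: feas_le1 hf k.
have k0 : (i0 < k)%N.
  by rewrite /= lt0n; apply: contra kn => /eqP k0; apply/eqP/val_inj.
have := agr i0 k0; rewrite /r1 /rho1 eqxx mulr1 => h.
have := feas_pair hf i0 k; rewrite eq_sym kn => /(_ isT).
by rewrite h -{2}(addr0 1) lerD2l.
Qed.

Lemma greedy_shape (alpha : R) (r0 rho0 : 'I_m -> R) : 0 <= alpha -> greedy alpha r0 rho0 ->
  r0 i0 * rho0 i0 = 1 /\ forall k, k != i0 -> r0 k * rho0 k = 0.
Proof.
move=> ha [hf hg].
have e1 : r0 i0 * rho0 i0 = 1.
  apply/le_anti; rewrite (feas_le1 hf) /=.
  have := hg i0 r1 rho1 (feas_r1 alpha ha) (fun j (hj : (j < 0)%N) => False_ind _ (notF hj)).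
  by rewrite /r1 /rho1 eqxx mulr1.
split => // k kn; apply/le_anti; rewrite (feas_ge0 hf) andbT.
have := feas_pair hf i0 k; rewrite eq_sym kn => /(_ isT).
by rewrite e1 -{2}(addr0 1) lerD2l.
Qed.

End P3.

Lemma alg3 (R : realType) (a b c : R) : 0 <= c -> c <= b -> b <= a ->
  a * (b / a) * (c / b) = c.
Proof.
move=> c0 cb ba.
have [b0|bn] := eqVneq b 0.
  have c00 : c = 0 by apply/le_anti; rewrite c0 -b0 cb.
  by rewrite b0 c00 !mul0r mulr0.
have bp : 0 < b by rewrite lt_neqAle eq_sym bn (le_trans c0 cb).
have an : a != 0 by rewrite gt_eqF // (lt_le_trans bp ba).
by rewrite (mulrC a) divfK // (mulrC b) divfK.
Qed.

Theorem proposition2 (R : realType) (d : measure_display) (T : measurableType d)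
  (P : probability T R) (m : nat) (hm : (0 < m)%N)
  (ystar yhat yhat' : T -> 'I_m) (C : T -> {set 'I_m})
  (mystar : forall i : 'I_m, measurable [set w | ystar w = i])
  (myhat : forall i : 'I_m, measurable [set w | yhat w = i])
  (myhat' : forall i : 'I_m, measurable [set w | yhat' w = i])
  (mC : forall S : {set 'I_m}, measurable [set w | C w = S])
  (hcorrect : forall w, yhat' w = ystar w -> ystar w \in C w)
  (alpha : R) (halpha : 0 <= alpha <= 1) :
  let a := Pr P (ev_correct yhat ystar) in
  let r := r_k P C in
  let rho := rho_k P ystar C in
  let f := fpost P ystar yhat' C in
  (* (1) *)
  Pr P (ev_correct yhat' ystar) - a = \sum_(k < m) r k * rho k * f k - a
  (* (2) *)
  /\ ((forall k, 0 < f k) ->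
      (forall k, a / (m%:R * f k) < r k * rho k) ->
      0 < Pr P (ev_correct yhat' ystar) - a)
  (* (3) *)
  /\ (forall g : 'I_m -> R,
        (forall k, 0 <= g k <= 1) ->
        (forall i j : 'I_m, (i <= j)%N -> g j <= g i) ->
        (exists r0 rho0 : 'I_m -> R, greedy alpha r0 rho0) /\
        forall r0 rho0 : 'I_m -> R, greedy alpha r0 rho0 ->
          (forall r' rho' : 'I_m -> R, feasible alpha r' rho' ->
             objective g a r' rho' <= objective g a r0 rho0) /\
          (forall i j : 'I_m, (i <= j)%N -> r0 j * rho0 j <= r0 i * rho0 i)).
Proof.
move=> a r rho f.
pose h w := (ystar w, yhat' w, C w).
have mh : forall x, measurable [set w | h w = x].
  case=> [[i j] S].
  have -> : [set w | h w = (i, j, S)] =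
      [set w | ystar w = i] `&` [set w | yhat' w = j] `&` [set w | C w = S].
    apply/seteqP; split => w; rewrite /h /=; first by case=> -> -> ->.
    by case=> [[-> ->] ->].
  by apply: measurableI; [apply: measurableI|].
have mS : forall k, measurable (ev_size C k).
  by move=> k; exact: (@mfiber _ _ _ h (fun x => #|x.2| = k.+1) mh).
have mV : measurable (ev_cover ystar C).
  exact: (@mfiber _ _ _ h (fun x => x.1.1 \in x.2) mh).
have mX : measurable (ev_correct yhat' ystar).
  exact: (@mfiber _ _ _ h (fun x => x.1.2 = x.1.1) mh).
have P1 : Pr P (ev_correct yhat' ystar) = \sum_(k < m) r k * rho k * f k.
  rewrite (@Pr_sum _ _ _ P m (ev_size C) _ mX mS).
  - apply: eq_bigr => k _.
    rewrite /r /rho /f /r_k /rho_k /fpost /condPr (setIC (ev_cover _ _)).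
    have -> : ev_correct yhat' ystar `&` ev_size C k =
              ev_correct yhat' ystar `&` (ev_size C k `&` ev_cover ystar C).
      apply/seteqP; split => w /=; last by case=> ? [].
      by case=> hw ?; split => //; split => //; exact: hcorrect.
    rewrite alg3 //; first exact: Pr_ge0.
    + have mSV := measurableI _ _ (mS k) mV.
      apply: (Pr_mono P (measurableI _ _ mX mSV) mSV).
      by move=> w [_ Hw].
    + apply: (Pr_mono P (measurableI _ _ (mS k) mV) (mS k)).
      by move=> w [Hw _].
  - move=> i j [w [hi hj]]; apply: val_inj; move: hi hj.
    by rewrite /ev_size /= => -> [].
  - move=> w /hcorrect hw.
    have c0 : (0 < #|C w|)%N by apply/card_gt0P; exists (ystar w).
    have cm : (#|C w|.-1 < m)%N.
      have := max_card (mem (C w)); rewrite card_ord.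
      by case: #|C w| c0.
    exists (Ordinal cm); rewrite /ev_size /=.
    by rewrite prednK.
split; first by rewrite P1.
clearbody f.
split.
  move=> fpos hlt; rewrite P1 subr_gt0.
  have -> : a = \sum_(k < m) a / m%:R.
    rewrite sumr_const card_ord -[RHS]mulr_natr divfK //.
    by rewrite pnatr_eq0 -lt0n.
  apply: ltr_sum; first by apply/hasP; exists (Ordinal hm); rewrite ?mem_index_enum.
  move=> k _.
  have H := hlt k; rewrite -(ltr_pM2r (fpos k)) in H.
  have e : a / (m%:R * f k) * f k = a / m%:R.
    by rewrite invfM mulrA divfK // gt_eqF // fpos.
  by rewrite e in H.
move=> g hg gmono.
have ha : 0 <= alpha by case/andP: halpha.
pose i0 : 'I_m := Ordinal hm.
split; first by exists (@r1 R m hm), (@rho1 R m); exact: greedy_r1.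
move=> r0 rho0 hgr.
have [e1 e0] := greedy_shape hm ha hgr.
have s0 : \sum_(k < m) r0 k * rho0 k * g k = g i0.
  rewrite (bigD1 i0) //= e1 mul1r big1 ?addr0 // => k kn.
  by rewrite e0 // mul0r.
split.
  move=> r' rho' hf; rewrite /objective lerD2r s0.
  apply: (@le_trans _ _ (\sum_(k < m) r' k * rho' k * g i0)).
    apply: ler_sum => k _; apply: ler_wpM2l; first exact: feas_ge0 hf k.
    exact: gmono.
  rewrite -mulr_suml; apply: ler_piMl; first by case/andP: (hg i0).
  exact: feas_sum hf.
move=> i j ij.
have [->|inz] := eqVneq i i0.
  by rewrite e1; case: hgr => hf _; exact: feas_le1 hf j.
have jnz : j != i0.
  apply: contra inz => /eqP jz; apply/eqP/val_inj => /=.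
  by apply/eqP; rewrite -leqn0 -[X in (_ <= X)%N]/(val i0) -jz.
by rewrite e0 // e0.
Qed.
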